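(* Let $0\le\alpha<\tfrac12$ and let $D$ be a distribution on $\{0,1\}^n$ given by a forest BN (every node has at most one parent) with all conditional probabilities in $(0,1)$ that is $\alpha$-difference bounded. Then every conjunction $f$ of $d$ literals satisfies $L_1(f)\le\left(\frac{2-2\alpha}{1-2\alpha}\right)^{2d}$.
   Context: For a BN with parent sets $\operatorname{pa}(v)$, let $\mu_{v,x_{\operatorname{pa}(v)}}=P(X_v=1\mid X_{\operatorname{pa}(v)}=x_{\operatorname{pa}(v)})$ and $\sigma_{v,x_{\operatorname{pa}(v)}}=\sqrt{\mu_{v,x_{\operatorname{pa}(v)}}(1-\mu_{v,x_{\operatorname{pa}(v)}})}$ (for roots, $\mu_v=P(X_v=1)$). The BN is $\alpha$-difference bounded if for every $v$ and every two assignments $x,y$ to $\operatorname{pa}(v)$, $|\mu_{v,x}-\mu_{v,y}|\le\alpha$ and $|\sigma_{v,x}-\sigma_{v,y}|\le\alpha$. The BN-induced basis is $\phi_v(x)=(x_v-\mu_{v,x_{\operatorname{pa}(v)}})/\sigma_{v,x_{\operatorname{pa}(v)}}$, $\phi_S=\prod_{v\in S}\phi_v$; $\hat f_S=\mathbb{E}_D[f(X)\phi_S(X)]$; $L_1(f)=\sum_{S\subseteq[n]}|\hat f_S|$. A conjunction of $d$ literals is $f(x)=\prod_{i\in T_1}x_i\prod_{j\in T_0}(1-x_j)$ with $T_0,T_1$ disjoint and $|T_0\cup T_1|=d$. *)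

(* Defs.v *)
From HB Require Import structures.
From mathcomp Require Import all_boot all_order all_algebra.
Set Implicit Arguments. Unset Strict Implicit. Unset Printing Implicit Defensive.
Import Order.TTheory GRing.Theory Num.Theory.
Local Open Scope ring_scope.

Notation pt n := {ffun 'I_n -> bool}.

(* A forest Bayesian network on n binary variables:
   - pa v = None  : v is a root, P(X_v = 1) = cp v false (cp v true unused);
   - pa v = Some u: v has the single parent u, P(X_v = 1 | X_u = b) = cp v b. *)
Record forestBN (R : Type) (n : nat) := ForestBN {
  pa : 'I_n -> option 'I_n;
  cp : 'I_n -> bool -> R
}.

Section BN.
Variables (R : rcfType) (n : nat) (B : forestBN R n).

Definition acyclic : Prop :=
  exists rk : 'I_n -> nat, forall u v, pa B v = Some u -> (rk u < rk v)%N.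

Definition mu (v : 'I_n) (x : pt n) : R :=
  match pa B v with Some u => cp B v (x u) | None => cp B v false end.

Definition sigma (v : 'I_n) (x : pt n) : R := Num.sqrt (mu v x * (1 - mu v x)).

Definition distr (x : pt n) : R :=
  \prod_(v < n) (if x v then mu v x else 1 - mu v x).

Definition cp_open : Prop := forall v x, 0 < mu v x < 1.

Definition diff_bounded (alpha : R) : Prop :=
  forall v x y, `|mu v x - mu v y| <= alpha /\ `|sigma v x - sigma v y| <= alpha.

Definition phi (v : 'I_n) (x : pt n) : R := ((x v)%:R - mu v x) / sigma v x.
Definition phiS (S : {set 'I_n}) (x : pt n) : R := \prod_(v in S) phi v x.

Definition fcoef (f : pt n -> R) (S : {set 'I_n}) : R :=
  \sum_(x : pt n) distr x * (f x * phiS S x).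

Definition L1 (f : pt n -> R) : R := \sum_(S : {set 'I_n}) `|fcoef f S|.
End BN.

Definition conj (R : rcfType) (n : nat) (T0 T1 : {set 'I_n}) (x : pt n) : R :=
  (\prod_(i in T1) ((x i)%:R : R)) * \prod_(j in T0) (1 - ((x j)%:R : R)).

(* Main.v *)
Require Import Defs.
From HB Require Import structures.
From mathcomp Require Import all_boot all_order all_algebra.
From mathcomp Require Import ring lra zify.
From Stdlib Require Import Lia.
Import Order.TTheory GRing.Theory Num.Theory.
Local Open Scope ring_scope.

Local Set Implicit Arguments.
Local Unset Strict Implicit.

Definition upd (n : nat) (x : pt n) (v : 'I_n) (b : bool) : pt n :=
  [ffun i => if i == v then b else x i].

Lemma upd_v n (x : pt n) v b : upd x v b v = b.
Proof. by rewrite /upd ffunE eqxx. Qed.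
Lemma upd_ne n (x : pt n) v b i : i != v -> upd x v b i = x i.
Proof. by rewrite /upd ffunE => /negbTE ->. Qed.
Lemma upd_id n (x : pt n) v : upd x v (x v) = x.
Proof. by apply/ffunP=> i; rewrite /upd ffunE; case: eqP => // ->. Qed.
Lemma upd_upd n (x : pt n) v b c : upd (upd x v b) v c = upd x v c.
Proof. by apply/ffunP=> i; rewrite /upd !ffunE; case: eqP. Qed.

Definition wA (R : rcfType) n (B : forestBN R n) (A : {set 'I_n}) (v : 'I_n) (x : pt n) : R :=
  if v \in A then (if x v then mu B v x else 1 - mu B v x) else 2^-1.
Definition DA (R : rcfType) n (B : forestBN R n) (A : {set 'I_n}) (x : pt n) : R := \prod_(v < n) wA B A v x.
Definition cA (R : rcfType) n (B : forestBN R n) (A : {set 'I_n}) (g : pt n -> R) (S : {set 'I_n}) : R :=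
  \sum_(x : pt n) DA B A x * (g x * phiS B S x).
Definition L1A (R : rcfType) n (B : forestBN R n) (A : {set 'I_n}) (g : pt n -> R) : R :=
  \sum_(S : {set 'I_n} | S \subset A) `|cA B A g S|.
Definition indep (R : Type) n (v : 'I_n) (F : pt n -> R) := forall x b, F (upd x v b) = F x.

Lemma mu_indep (R : rcfType) n (B : forestBN R n) v w :
  pa B w <> Some v -> indep v (mu B w).
Proof.
move=> h x b; rewrite /mu; case E: (pa B w) => [u|] //; rewrite upd_ne //.
by apply/eqP => uv; apply: h; rewrite E uv.
Qed.

Lemma sigma_indep (R : rcfType) n (B : forestBN R n) v w :
  pa B w <> Some v -> indep v (sigma B w).
Proof. by move=> h x b; rewrite /sigma (mu_indep h). Qed.

Lemma phi_indep (R : rcfType) n (B : forestBN R n) v w :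
  w != v -> pa B w <> Some v -> indep v (phi B w).
Proof. by move=> wv h x b; rewrite /phi upd_ne // (mu_indep h) (sigma_indep h). Qed.

Lemma phiS_indep (R : rcfType) n (B : forestBN R n) v (S : {set 'I_n}) :
  v \notin S -> (forall w, w \in S -> pa B w <> Some v) -> indep v (phiS B S).
Proof.
move=> vS h x b; rewrite /phiS; apply: eq_bigr => w wS; apply: phi_indep; last exact: h.
by apply/eqP => e; rewrite -e wS in vS.
Qed.

Lemma conj_indep (R : rcfType) n v (T0 T1 : {set 'I_n}) :
  v \notin T0 -> v \notin T1 -> indep v (conj R T0 T1).
Proof.
move=> h0 h1 x b; rewrite /conj; congr (_ * _); apply: eq_bigr => i iT; rewrite upd_ne //;
  apply/eqP => e; [by rewrite -e iT in h1 | by rewrite -e iT in h0].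
Qed.

Lemma wA_indep (R : rcfType) n (B : forestBN R n) (A : {set 'I_n}) v i :
  v \notin A -> (forall w, w \in A -> pa B w <> Some v) -> indep v (wA B A i).
Proof.
move=> vA h x b; rewrite /wA; case: ifP => iA //.
rewrite upd_ne ?(mu_indep (h _ iA)) //.
by apply/eqP => e; rewrite -e iA in vA.
Qed.

Lemma DA_indep (R : rcfType) n (B : forestBN R n) (A : {set 'I_n}) v :
  v \notin A -> (forall w, w \in A -> pa B w <> Some v) -> indep v (DA B A).
Proof. by move=> vA h x b; rewrite /DA; apply: eq_bigr => i _; apply: wA_indep. Qed.

Lemma elimv (R : rcfType) n (B : forestBN R n) (A : {set 'I_n}) v (Q : pt n -> R) :
  v \in A -> (forall w, w \in A -> pa B w <> Some v) -> pa B v <> Some v ->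
  \sum_x DA B A x * Q x =
  \sum_x DA B (A :\ v) x * (mu B v x * Q (upd x v true) + (1 - mu B v x) * Q (upd x v false)).
Proof.
move=> vA hch hv.
set fl := fun x : pt n => upd x v (~~ x v).
have flK : involutive fl.
  by move=> x; rewrite /fl upd_upd upd_v negbK upd_id.
have E : forall F : pt n -> R, \sum_x F x = \sum_x F (fl x).
  by move=> F; rewrite (reindex_inj (inv_inj flK)).
have vA' : v \notin A :\ v by rewrite in_setD1 eqxx.
have hch' : forall w, w \in A :\ v -> pa B w <> Some v.
  by move=> w; rewrite in_setD1 => /andP [_ /hch].
set P := fun x : pt n => \prod_(i < n | i != v) wA B (A :\ v) i x.
have DA'E : forall x, DA B (A :\ v) x = 2^-1 * P x.
  by move=> x; rewrite /DA (bigD1 v) //= /wA (negbTE vA').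
have DAE : forall x, DA B A x = wA B A v x * P x.
  move=> x; rewrite /DA (bigD1 v) //=; congr (_ * _); apply: eq_bigr => i iv.
  by rewrite /wA in_setD1 iv.
have PE : forall x, P (fl x) = P x.
  by move=> x; apply: eq_bigr => i _; apply: wA_indep.
have key : forall x, DA B (A :\ v) x * (mu B v x * Q (upd x v true) + (1 - mu B v x) * Q (upd x v false))
   = 2^-1 * (DA B A x * Q x + DA B A (fl x) * Q (fl x)).
  move=> x; rewrite DA'E !DAE PE /wA vA /fl upd_v (mu_indep hv).
  have -> : Q x = Q (upd x v (x v)) by rewrite upd_id.
  by case: (x v) => /=; ring.
rewrite (eq_bigr _ (fun x _ => key x)) -big_distrr /= big_split /=.
rewrite -(E (fun x => DA B A x * Q x)).
have h2 : (2 : R) != 0 by rewrite pnatr_eq0.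
set s := \sum_x _.
lra.
Qed.

Lemma sum_split_v (R : rcfType) n (A : {set 'I_n}) v (F : {set 'I_n} -> R) :
  v \in A ->
  \sum_(S : {set 'I_n} | S \subset A) F S =
  \sum_(S : {set 'I_n} | S \subset A :\ v) (F S + F (v |: S)).
Proof.
move=> vA; rewrite (bigID (fun S : {set 'I_n} => v \in S)) /= addrC big_split /=; congr (_ + _).
  by apply: eq_bigl => S; rewrite subsetD1.
rewrite (reindex_onto (fun S => v |: S) (fun S => S :\ v)) /=; last first.
  by move=> S /andP [_ vS]; rewrite setD1K.
apply: eq_bigl => S; rewrite subsetD1 setU11 andbT.
apply/idP/idP.
  move=> /andP [h1 /eqP h2].
  have vS : v \notin S by rewrite -h2 in_setD1 eqxx.
  rewrite vS andbT; apply: subset_trans h1; exact: subsetU1.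
move=> /andP [h1 h2]; rewrite setU1K // eqxx andbT.
by rewrite subUset sub1set vA h1.
Qed.

Definition gv (R : rcfType) n (T0 T1 : {set 'I_n}) (v : 'I_n) (b : bool) : R :=
  (if v \in T1 then (b%:R : R) else 1) * (if v \in T0 then 1 - (b%:R : R) else 1).

Lemma prod_D1 (R : rcfType) n (T : {set 'I_n}) v (F : 'I_n -> R) :
  \prod_(i in T) F i = (if v \in T then F v else 1) * \prod_(i in T :\ v) F i.
Proof.
case: ifP => h; first by rewrite (big_setD1 v h).
rewrite mul1r; apply: eq_bigl => i; rewrite in_setD1; case: eqP => // ->.
by rewrite h.
Qed.

Lemma conj_split (R : rcfType) n (T0 T1 : {set 'I_n}) v x :
  conj R T0 T1 x = gv R T0 T1 v (x v) * conj R (T0 :\ v) (T1 :\ v) x.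
Proof.
by rewrite /conj /gv (prod_D1 T1 v) (prod_D1 T0 v) mulrACA.
Qed.

Lemma coef_noV (R : rcfType) n (B : forestBN R n) (A : {set 'I_n}) v (T0 T1 S : {set 'I_n}) :
  v \in A -> (forall w, w \in A -> pa B w <> Some v) -> pa B v <> Some v ->
  S \subset A :\ v ->
  cA B A (conj R T0 T1) S =
  cA B (A :\ v) (fun x => (mu B v x * gv R T0 T1 v true + (1 - mu B v x) * gv R T0 T1 v false)
                           * conj R (T0 :\ v) (T1 :\ v) x) S.
Proof.
move=> vA hch hv /subsetD1P [SA vS].
rewrite /cA (elimv (fun x => conj R T0 T1 x * phiS B S x) vA hch hv).
apply: eq_bigr => x _; congr (_ * _).
have h0 : v \notin T0 :\ v by rewrite in_setD1 eqxx.
have h1 : v \notin T1 :\ v by rewrite in_setD1 eqxx.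
rewrite !(@conj_split R n T0 T1 v) !upd_v !(@conj_indep R n v _ _ h0 h1).
have hS : forall w, w \in S -> pa B w <> Some v.
  by move=> w wS; apply: hch; apply: (subsetP SA).
rewrite !(phiS_indep vS hS); ring.
Qed.

Lemma phiS_U1 (R : rcfType) n (B : forestBN R n) (S : {set 'I_n}) v x :
  v \notin S -> phiS B (v |: S) x = phi B v x * phiS B S x.
Proof. by move=> vS; rewrite /phiS big_setU1. Qed.

Lemma coef_V (R : rcfType) n (B : forestBN R n) (A : {set 'I_n}) v (T0 T1 S : {set 'I_n}) :
  v \in A -> (forall w, w \in A -> pa B w <> Some v) -> pa B v <> Some v ->
  cp_open B ->
  S \subset A :\ v ->
  cA B A (conj R T0 T1) (v |: S) =
  cA B (A :\ v) (fun x => ((gv R T0 T1 v true - gv R T0 T1 v false) * sigma B v x)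
                           * conj R (T0 :\ v) (T1 :\ v) x) S.
Proof.
move=> vA hch hv hop /subsetD1P [SA vS].
rewrite /cA (elimv (fun x => conj R T0 T1 x * phiS B (v |: S) x) vA hch hv).
apply: eq_bigr => x _; congr (_ * _).
rewrite !(phiS_U1 _ _ vS).
have h0 : v \notin T0 :\ v by rewrite in_setD1 eqxx.
have h1 : v \notin T1 :\ v by rewrite in_setD1 eqxx.
rewrite !(@conj_split R n T0 T1 v) !upd_v !(@conj_indep R n v _ _ h0 h1).
have hS : forall w, w \in S -> pa B w <> Some v.
  by move=> w wS; apply: hch; apply: (subsetP SA).
rewrite !(phiS_indep vS hS).
rewrite /phi !upd_v !(mu_indep hv) !(sigma_indep hv).
set m := mu B v x.
have [m0 m1] : 0 < m /\ m < 1 by apply/andP; exact: hop.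
have hs2 : sigma B v x ^+ 2 = m * (1 - m) by rewrite /sigma sqr_sqrtr // -/m; nra.
have hs0 : sigma B v x != 0 by rewrite /sigma gt_eqF // sqrtr_gt0 -/m; nra.
set s := sigma B v x in hs2 hs0 *.
set g1 := gv R T0 T1 v true; set g0 := gv R T0 T1 v false.
set c := conj R _ _ x; set p := phiS B S x.
have -> : m * (g1 * c * ((true%:R - m) / s * p)) + (1 - m) * (g0 * c * ((false%:R - m) / s * p))
   = (g1 - g0) * (m * (1 - m)) / s * c * p.
  by rewrite /=; field.
by rewrite -hs2 expr2 (mulrA (g1 - g0)) mulfK.
Qed.

Definition yb n (b : bool) : pt n := [ffun _ => b].
Definition bu (R : rcfType) n (B : forestBN R n) v (x : pt n) : bool :=
  if pa B v is Some u then x u else false.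

Lemma mu_bu (R : rcfType) n (B : forestBN R n) v x :
  mu B v x = mu B v (yb n (bu B v x)).
Proof. by rewrite /mu /bu; case: (pa B v) => [u|] //; rewrite ffunE. Qed.

Lemma sigma_bu (R : rcfType) n (B : forestBN R n) v x :
  sigma B v x = sigma B v (yb n (bu B v x)).
Proof. by rewrite /sigma -mu_bu. Qed.

Lemma bool_lin (R : rcfType) (F : bool -> R) b :
  F b = F false + (F true - F false) * (b%:R : R).
Proof. by case: b; rewrite /= ?mulr1 ?mulr0; lra. Qed.

Lemma cA_ext (R : rcfType) n (B : forestBN R n) A (g h : pt n -> R) S :
  (forall x, g x = h x) -> cA B A g S = cA B A h S.
Proof. by move=> e; apply: eq_bigr => x _; rewrite e. Qed.

Lemma cA_lin (R : rcfType) n (B : forestBN R n) A (g h : pt n -> R) a b S :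
  cA B A (fun x => (a + b * h x) * g x) S = a * cA B A g S + b * cA B A (fun x => g x * h x) S.
Proof.
rewrite /cA !big_distrr -big_split; apply: eq_bigr => x _ /=; ring.
Qed.

Definition Pf (R : rcfType) n (B : forestBN R n) (T0 T1 : {set 'I_n}) v b : R :=
  mu B v (yb n b) * gv R T0 T1 v true + (1 - mu B v (yb n b)) * gv R T0 T1 v false.
Definition Sf (R : rcfType) n (B : forestBN R n) (T0 T1 : {set 'I_n}) v b : R :=
  (gv R T0 T1 v true - gv R T0 T1 v false) * sigma B v (yb n b).

Lemma step_bound (R : rcfType) n (B : forestBN R n) (A : {set 'I_n}) v (T0 T1 : {set 'I_n}) :
  v \in A -> (forall w, w \in A -> pa B w <> Some v) -> pa B v <> Some v ->
  cp_open B ->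
  L1A B A (conj R T0 T1) <=
    (`|Pf B T0 T1 v false| + `|Sf B T0 T1 v false|) * L1A B (A :\ v) (conj R (T0 :\ v) (T1 :\ v))
  + (`|Pf B T0 T1 v true - Pf B T0 T1 v false| + `|Sf B T0 T1 v true - Sf B T0 T1 v false|)
     * L1A B (A :\ v) (fun x => conj R (T0 :\ v) (T1 :\ v) x * (bu B v x)%:R).
Proof.
move=> vA hch hv hop.
rewrite /L1A (sum_split_v _ vA) !big_distrr -big_split /=; apply: ler_sum => S hS.
rewrite (@coef_noV R n B A v T0 T1 S vA hch hv hS) (@coef_V R n B A v T0 T1 S vA hch hv hop hS).
set g' := conj R (T0 :\ v) (T1 :\ v).
rewrite (@cA_ext _ _ B _ _ (fun x => (Pf B T0 T1 v false + (Pf B T0 T1 v true - Pf B T0 T1 v false)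
     * (bu B v x)%:R) * g' x)); last first.
  move=> x; congr (_ * _); rewrite (mu_bu B v x).
  exact: (bool_lin (fun b => Pf B T0 T1 v b) (bu B v x)).
rewrite (@cA_ext _ _ B _ (fun x => ((gv R T0 T1 v true - gv R T0 T1 v false) * sigma B v x) * g' x) (fun x => (Sf B T0 T1 v false + (Sf B T0 T1 v true - Sf B T0 T1 v false)
     * (bu B v x)%:R) * g' x)); last first.
  move=> x; congr (_ * _); rewrite (sigma_bu B v x).
  exact: (bool_lin (fun b => Sf B T0 T1 v b) (bu B v x)).
rewrite !cA_lin.
set c1 := cA B (A :\ v) g' S.
set c2 := cA B (A :\ v) _ S.
set a := Pf _ _ _ _ false; set b := Pf _ _ _ _ true - _.
set a' := Sf _ _ _ _ false; set b' := Sf _ _ _ _ true - _.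
have t1 := ler_normD (a * c1) (b * c2).
have t2 := ler_normD (a' * c1) (b' * c2).
rewrite !normrM in t1 t2.
apply: le_trans (lerD t1 t2) _; by rewrite !mulrDl addrACA /a' normrM.
Qed.

Lemma gv01 (R : rcfType) n (T0 T1 : {set 'I_n}) v b :
  gv R T0 T1 v b = 0 \/ gv R T0 T1 v b = 1.
Proof.
rewrite /gv; case: b; case: (v \in T1); case: (v \in T0);
  rewrite /= ?(mulr1n, mulr0n, mulr1, mul1r, subrr, mulr0, mul0r, subr0); auto.
Qed.

Lemma gv_out (R : rcfType) n (T0 T1 : {set 'I_n}) v b :
  v \notin T0 -> v \notin T1 -> gv R T0 T1 v b = 1.
Proof. by rewrite /gv => /negbTE -> /negbTE ->; rewrite mulr1. Qed.

Lemma gdiff (R : rcfType) n (T0 T1 : {set 'I_n}) v :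
  `|gv R T0 T1 v true - gv R T0 T1 v false| <= 1.
Proof.
by case: (gv01 R T0 T1 v true) => ->; case: (gv01 R T0 T1 v false) => ->;
  rewrite ?subrr ?subr0 ?sub0r ?normr0 ?normrN ?normr1.
Qed.

Lemma sigma_le (R : rcfType) n (B : forestBN R n) v x :
  cp_open B -> 0 <= sigma B v x <= 2^-1.
Proof.
move=> hop; have /andP [m0 m1] := hop v x.
rewrite /sigma; set m := mu B v x in m0 m1 *.
have h0 : 0 <= m * (1 - m) by nra.
have hs2 := sqr_sqrtr h0.
have hs0 := sqrtr_ge0 (m * (1 - m)).
set s := Num.sqrt _ in hs2 hs0 *.
have hsq : s ^+ 2 <= 2^-1 * 2^-1.
  rewrite hs2; have := sqr_ge0 (m - 2^-1); rewrite !expr2; lra.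
apply/andP; split => //; rewrite leNgt; apply/negP => hlt.
have : 2^-1 * 2^-1 < s * s.
  apply: ltr_pM => //; lra.
rewrite -expr2; lra.
Qed.

Lemma coef_bounds (R : rcfType) n (B : forestBN R n) (T0 T1 : {set 'I_n}) v alpha :
  cp_open B -> diff_bounded B alpha ->
  [/\ `|Pf B T0 T1 v false| <= 1, `|Sf B T0 T1 v false| <= 2^-1,
      `|Pf B T0 T1 v true - Pf B T0 T1 v false| <= alpha &
      `|Sf B T0 T1 v true - Sf B T0 T1 v false| <= alpha].
Proof.
move=> hop hdb.
have [hm hs] := hdb v (yb n true) (yb n false).
have hg := gdiff R T0 T1 v.
have /andP [c0 c1] := hop v (yb n false).
have /andP [s0 s1] := sigma_le v (yb n false) hop.
set g1 := gv R T0 T1 v true in hg *; set g0 := gv R T0 T1 v false in hg *.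
have G1 := gv01 R T0 T1 v true; have G0 := gv01 R T0 T1 v false.
rewrite -/g1 -/g0 in G1 G0.
split.
- rewrite /Pf -/g1 -/g0; set c := mu B v (yb n false) in c0 c1 *.
  rewrite ler_norml; case: G1 => ->; case: G0 => ->; apply/andP; split; lra.
- rewrite /Sf -/g1 -/g0 normrM.
  rewrite -[X in _ <= X]mul1r; apply: ler_pM => //; rewrite ger0_norm //.
- rewrite /Pf -/g1 -/g0.
  have -> : mu B v (yb n true) * g1 + (1 - mu B v (yb n true)) * g0 -
     (mu B v (yb n false) * g1 + (1 - mu B v (yb n false)) * g0) =
     (mu B v (yb n true) - mu B v (yb n false)) * (g1 - g0) by ring.
  by rewrite normrM -[X in _ <= X]mulr1; apply: ler_pM.
- rewrite /Sf -/g1 -/g0 -mulrBr normrM -[X in _ <= X]mul1r; exact: ler_pM.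
Qed.

Lemma coef_out (R : rcfType) n (B : forestBN R n) (T0 T1 : {set 'I_n}) v b :
  v \notin T0 -> v \notin T1 -> Pf B T0 T1 v b = 1 /\ Sf B T0 T1 v b = 0.
Proof.
move=> h0 h1; rewrite /Pf /Sf !gv_out //; split; last by rewrite subrr mul0r.
by rewrite !mulr1 subrKC.
Qed.

Definition Kc (R : rcfType) (alpha : R) : R := ((2 - 2 * alpha) / (1 - 2 * alpha)) ^+ 2.

Lemma K_facts (R : rcfType) (alpha : R) :
  0 <= alpha -> alpha < 1 / 2 -> 1 <= Kc alpha /\ 3 / 2 + 2 * alpha * Kc alpha <= Kc alpha.
Proof.
move=> a0 a1.
have t0 : 0 < 1 - 2 * alpha by lra.
set t := 1 - 2 * alpha in t0 *.
set q := (2 - 2 * alpha) / t.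
have hqt : q * t = 2 - 2 * alpha by rewrite /q divfK // gt_eqF.
have tdef : t = 1 - 2 * alpha by [].
have hq1 : 1 <= q by nra.
rewrite /Kc -/t -/q expr2; split; first nra.
have e : 2 * alpha = 1 - t by rewrite /t; lra.
rewrite e.
have : t * (q * q) = q * (q * t) by ring.
rewrite hqt => h.
nra.
Qed.

Definition ancestral (R : rcfType) n (B : forestBN R n) (A : {set 'I_n}) :=
  forall w u, w \in A -> pa B w = Some u -> u \in A.

Lemma L1A_ext (R : rcfType) n (B : forestBN R n) A (g h : pt n -> R) :
  (forall x, g x = h x) -> L1A B A g = L1A B A h.
Proof. by move=> e; apply: eq_bigr => S _; rewrite (cA_ext _ _ _ e). Qed.

Lemma L1A_ge0 (R : rcfType) n (B : forestBN R n) A (g : pt n -> R) : 0 <= L1A B A g.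
Proof. by apply: sumr_ge0 => S _. Qed.

Lemma L1A_zero (R : rcfType) n (B : forestBN R n) A : L1A B A (fun _ => 0) = 0.
Proof.
apply: big1 => S _; rewrite /cA big1 ?normr0 // => x _; by rewrite mul0r mulr0.
Qed.

Lemma base_case (R : rcfType) n (B : forestBN R n) : L1A B set0 (conj R set0 set0) = 1.
Proof.
rewrite /L1A (eq_bigl (fun S => S == set0)); last by move=> S; rewrite subset0.
rewrite big_pred1_eq /cA.
have e : forall x : pt n, DA B set0 x * (conj R set0 set0 x * phiS B set0 x)
   = \prod_(v < n) (fun (v : 'I_n) (b : bool) => (2^-1 : R)) v (x v).
  move=> x; rewrite /conj /phiS !big_set0 !mulr1 /DA; apply: eq_bigr => v _.
  by rewrite /wA in_set0.
rewrite (eq_bigr _ (fun x _ => e x)) -(bigA_distr_bigA (fun (v : 'I_n) (b : bool) => (2^-1 : R))) /=.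
rewrite (eq_bigr (fun _ => (1:R))); first by rewrite big1 // normr1.
move=> v _; rewrite big_bool /=; lra.
Qed.

Lemma nat_aux1 (a b d : nat) : a = (true + b)%N -> (a <= d.+1)%N -> (b <= d)%N.
Proof. lia. Qed.
Lemma nat_aux2 (a b d : nat) (t : bool) : a = (t + b)%N -> (b <= d)%N -> (a <= d.+1)%N.
Proof. case: t => /=; lia. Qed.

Lemma main_ind (R : rcfType) n (B : forestBN R n) (alpha : R) (rk : 'I_n -> nat) :
  0 <= alpha -> alpha < 1 / 2 ->
  (forall u v, pa B v = Some u -> (rk u < rk v)%N) -> cp_open B -> diff_bounded B alpha ->
  forall m (A : {set 'I_n}), (#|A| <= m)%N -> ancestral B A ->
  forall d (T0 T1 : {set 'I_n}), T0 \subset A -> T1 \subset A -> (#|T0 :|: T1| <= d)%N ->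
  L1A B A (conj R T0 T1) <= Kc alpha ^+ d.
Proof.
move=> a0 a1 hrk hop hdb.
have [K1 K2] := K_facts a0 a1.
have base : forall (A T0 T1 : {set 'I_n}) d, A = set0 -> T0 \subset A -> T1 \subset A ->
    L1A B A (conj R T0 T1) <= Kc alpha ^+ d.
  move=> A T0 T1 d -> ; rewrite !subset0 => /eqP -> /eqP ->.
  by rewrite base_case exprn_ege1.
elim=> [|m IH] A hAm anc d T0 T1 h0 h1 hd.
  by apply: base h0 h1; apply: cards0_eq; lia.
case: (boolP (A == set0)) => [/eqP A0 | An]; first exact: base h0 h1.
have [i0 i0A] := set0Pn _ An.
set v := [arg max_(i > i0 in A) rk i].
have [vA vmax] : v \in A /\ forall j, j \in A -> (rk j <= rk v)%N.
  by rewrite /v; case: arg_maxnP => // j jA jmax; split.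
have hch : forall w, w \in A -> pa B w <> Some v.
  by move=> w wA e; have := hrk _ _ e; have := vmax _ wA; lia.
have hv : pa B v <> Some v by move=> e; have := hrk _ _ e; lia.
have hAm' : (#|A :\ v| <= m)%N by have := cardsD1 v A; rewrite vA; lia.
have anc' : ancestral B (A :\ v).
  move=> w u; rewrite !in_setD1 => /andP [_ wA] e; rewrite (anc _ _ wA e) andbT.
  by apply/eqP => uv; apply: (hch _ wA); rewrite e uv.
have h0' : T0 :\ v \subset A :\ v by apply: setSD.
have h1' : T1 :\ v \subset A :\ v by apply: setSD.
have hUD : T0 :\ v :|: T1 :\ v = (T0 :|: T1) :\ v by rewrite setDUl.
have st := step_bound T0 T1 vA hch hv hop.
have [b1 b2 b3 b4] := coef_bounds T0 T1 v hop hdb.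
apply: le_trans st _.
set X := L1A B (A :\ v) _; set Y := L1A B (A :\ v) _.
have X0 : 0 <= X by apply: L1A_ge0.
have Y0 : 0 <= Y by apply: L1A_ge0.
case: (boolP (v \in T0 :|: T1)) => vT; last first.
  move: vT; rewrite in_setU negb_or => /andP [v0 v1].
  have [p0 s0] := @coef_out R n B T0 T1 v false v0 v1.
  have [p1 s1] := @coef_out R n B T0 T1 v true v0 v1.
  rewrite p0 s0 p1 s1 !subrr normr0 normr1 !addr0 mul0r addr0 mul1r.
  apply: IH => //; rewrite hUD.
  by apply: leq_trans hd; apply: subset_leq_card; apply: subsetDl.
have hcard := cardsD1 v (T0 :|: T1); rewrite vT in hcard.
case: d hd => [|d] hd; first by rewrite hcard in hd.
have HX : X <= Kc alpha ^+ d.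
  by apply: IH => //; rewrite hUD; apply: (nat_aux1 hcard hd).
have HY : Y <= Kc alpha ^+ d.+1.
  rewrite /Y; case epa: (pa B v) => [u|].
  - have uA : u \in A :\ v.
      rewrite in_setD1 (anc _ _ vA epa) andbT.
      by apply/eqP => uv; apply: hv; rewrite epa uv.
    rewrite (@L1A_ext R n B (A :\ v) _ (conj R (T0 :\ v) (u |: (T1 :\ v)))); last first.
      move=> x; rewrite /conj /bu epa mulrAC; congr (_ * _).
      case: (boolP (u \in T1 :\ v)) => uT.
        have -> : u |: (T1 :\ v) = T1 :\ v by apply/setUidPr; rewrite sub1set.
        rewrite (big_setD1 u uT) /=.
        by case: (x u); rewrite /= ?mulr1n ?mulr0n ?mulr1 ?mulr0 ?mul0r ?mul1r.
      by rewrite big_setU1 //= mulrC.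
    apply: IH => //; first by rewrite subUset sub1set uA h1'.
    rewrite setUCA; apply: (nat_aux2 (cardsU1 u (T0 :\ v :|: T1 :\ v))); rewrite hUD.
    exact: (nat_aux1 hcard hd).
  - rewrite (@L1A_ext R n B (A :\ v) _ (fun _ => 0)); last by move=> x; rewrite /bu epa mulr0.
    by rewrite L1A_zero exprn_ge0 // (le_trans ler01 K1).
have k0 : 0 <= Kc alpha ^+ d by rewrite exprn_ge0 // (le_trans ler01 K1).
set k := Kc alpha ^+ d in HX k0 *.
rewrite exprS -/k in HY *.
set K := Kc alpha in K1 K2 HY *.
set pa0 := `|Pf _ _ _ _ false| + `|Sf _ _ _ _ false|.
set pa1 := `|Pf _ _ _ _ true - _| + `|Sf _ _ _ _ true - _|.
have e1 : pa0 * X <= 3 / 2 * k.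
  apply: ler_pM => //; rewrite /pa0; [apply: addr_ge0 => // | lra].
have e2 : pa1 * Y <= (2 * alpha) * (K * k).
  apply: ler_pM => //; rewrite /pa1; [apply: addr_ge0 => // | lra].
have e3 : (3 / 2 + 2 * alpha * K) * k <= K * k by apply: ler_wpM2r.
nra.
Qed.

Local Unset Implicit Arguments.

Theorem mainTheorem8 (R : rcfType) (n : nat) (B : forestBN R n) (alpha : R)
  (d : nat) (T0 T1 : {set 'I_n}) :
  0 <= alpha -> alpha < 1 / 2 ->
  acyclic B -> cp_open B -> diff_bounded B alpha ->
  [disjoint T0 & T1] -> #|T0 :|: T1| = d ->
  L1 B (conj R T0 T1) <= ((2 - 2 * alpha) / (1 - 2 * alpha)) ^+ (2 * d).
Proof.
move=> a0 a1 [rk hrk] hop hdb _ hd.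
have e : L1 B (conj R T0 T1) = L1A B setT (conj R T0 T1).
  rewrite /L1 /L1A [in RHS](eq_bigl (fun _ => true)); last by move=> S; rewrite subsetT.
  apply: eq_bigr => S _; congr `|_|; apply: eq_bigr => x _; congr (_ * _).
  by apply: eq_bigr => v _; rewrite /wA in_setT.
rewrite e exprM.
apply: (main_ind a0 a1 hrk hop hdb (m := n)).
- by rewrite cardsT card_ord.
- by move=> w u _ _; rewrite in_setT.
- exact: subsetT.
- exact: subsetT.
- by rewrite hd.
Qed.
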